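(* Let $A,B,C,D$ be real random variables on a common probability space with finite second moments, $\mathrm{Var}(B)>0$, $\mathrm{Var}(D)>0$, $|\mathrm{Corr}(B,D)|<1$, $\mathbb{E}[A]\neq0$, $\mathbb{E}[C]\neq 0$, and set $R=\mathbb{E}[A]/\mathbb{E}[C]$. Let $n\ge1$ and let $(A_i,B_i,C_i,D_i)_{i=1,\dots,n}$ be i.i.d. copies of $(A,B,C,D)$. For $\alpha,\beta\in\mathbb{R}$ put $N_\alpha=\overline{A_n}+\alpha(\mathbb{E}[B]-\overline{B_n})$ and $M_\beta=\overline{C_n}+\beta(\mathbb{E}[D]-\overline{D_n})$. Then the function $(\alpha,\beta)\mapsto\Phi(N_\alpha,M_\beta)$ on $\mathbb{R}^2$ has a unique minimizer $(\alpha_o,\beta_o)$, given by $$\alpha_o=\frac{\mathrm{Var}(D)\mathrm{Cov}(A,B)-R\,\mathrm{Var}(D)\mathrm{Cov}(B,C)+R\,\mathrm{Cov}(B,D)\mathrm{Cov}(C,D)-\mathrm{Cov}(B,D)\mathrm{Cov}(A,D)}{\mathrm{Var}(B)\mathrm{Var}(D)-\mathrm{Cov}(B,D)^2},$$ $$\beta_o=\frac{\mathrm{Cov}(B,D)\mathrm{Cov}(A,B)-R\,\mathrm{Cov}(B,D)\mathrm{Cov}(B,C)+R\,\mathrm{Var}(B)\mathrm{Cov}(C,D)-\mathrm{Var}(B)\mathrm{Cov}(A,D)}{R\big(\mathrm{Var}(B)\mathrm{Var}(D)-\mathrm{Cov}(B,D)^2\big)},$$ and in particular $\Phi(N_{\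alpha_o},M_{\beta_o})\le\Phi(\overline{A_n},\overline{C_n})$.
   Context: For a random variable $X$, $\overline{X_n}=\frac1n\sum_{i=1}^n X_i$ denotes the sample mean of the i.i.d. copies $X_1,\dots,X_n$. For real random variables $X,Z$ with finite second moments and $\mathbb{E}[Z]\neq0$, define the first-order (delta-method) approximation of the variance of the ratio $X/Z$: $$\Phi(X,Z)=\frac{\mathrm{Var}(X)}{\mathbb{E}[Z]^2}+\frac{\mathbb{E}[X]^2}{\mathbb{E}[Z]^4}\mathrm{Var}(Z)-2\frac{\mathbb{E}[X]}{\mathbb{E}[Z]^3}\mathrm{Cov}(X,Z).$$ $\Phi(N_\alpha,M_\beta)$ is the paper's variance of the CV/CV ratio estimator $N_\alpha/M_\beta$ of $R$, and $\Phi(\overline{A_n},\overline{C_n})=\Phi(N_0,M_0)$ is that of the Monte Carlo ratio estimator $\overline{A_n}/\overline{C_n}$; $\mathbb{E}[B],\mathbb{E}[D]$ are known constants. $\mathrm{Corr}(B,D)=\mathrm{Cov}(B,D)/\sqrt{\mathrm{Var}(B)\mathrm{Var}(D)}$. *)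

(* Defs.v *)
From HB Require Import structures.
From mathcomp Require Import all_boot all_order all_algebra.
From mathcomp Require Import all_classical all_reals all_analysis.
Set Implicit Arguments. Unset Strict Implicit. Unset Printing Implicit Defensive.
Import Order.TTheory GRing.Theory Num.Theory.
Local Open Scope classical_set_scope.
Local Open Scope ring_scope.

Section defs.
Context {d : measure_display} {T : measurableType d} {R : realType}.
Variable P : probability T R.

(* real-valued moments (the random variables considered have finite second
   moments, so these are the finite values of the library's extended-real ones) *)
Definition Ex (X : T -> R) : R := fine ('E_P[X])%E.
Definition Var (X : T -> R) : R := fine ('V_P[X]).
Definition Cov (X Y : T -> R) : R := fine (covariance P X Y).
Definition Corr (X Y : T -> R) : R := Cov X Y / Num.sqrt (Var X * Var Y).

(* first-order (delta-method) variance of the ratio X/Z *)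
Definition Phi (X Z : T -> R) : R :=
  Var X / Ex Z ^+ 2 + Ex X ^+ 2 / Ex Z ^+ 4 * Var Z
  - 2 * (Ex X / Ex Z ^+ 3) * Cov X Z.

Definition vec4 (A B C D : T -> R) : T -> (R * R * R * R)%type :=
  fun t => (A t, B t, C t, D t).

Definition same_law (V W : T -> (R * R * R * R)%type) : Prop :=
  forall S : set (R * R * R * R)%type, measurable S ->
    P (V @^-1` S) = P (W @^-1` S).

Definition mutually_independent n (V : 'I_n -> T -> (R * R * R * R)%type) : Prop :=
  forall (J : {set 'I_n}) (S : 'I_n -> set (R * R * R * R)%type),
    (forall j, measurable (S j)) ->
    P (\bigcap_(j in [set j | j \in J]) (V j @^-1` S j)) =
    (\prod_(j in J) P (V j @^-1` S j))%E.

End defs.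

Definition smean {T : Type} {R : realType} n (X : 'I_n -> T -> R) : T -> R :=
  fun t => (n%:R)^-1 * \sum_(i < n) X i t.

(* Main.v *)
Require Import Defs.
From HB Require Import structures.
From mathcomp Require Import all_boot all_order all_algebra.
From mathcomp Require Import all_classical all_reals all_analysis.
From mathcomp Require Import measurable_realfun.
From mathcomp Require Import ring lra.
Import Order.TTheory GRing.Theory Num.Theory.
Local Open Scope classical_set_scope.
Local Open Scope ring_scope.

Definition pairV {T Y1 Y2 : Type} (U : T -> Y1) (W : T -> Y2) : T -> Y1 * Y2 :=
  fun t => (U t, W t).

Section inst.
Context (d d1 d2 : measure_display) (T : measurableType d)
  (Y1 : measurableType d1) (Y2 : measurableType d2).
Variables (U : {mfun T >-> Y1}) (W : {mfun T >-> Y2}).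
Lemma pairV_meas : measurable_fun [set: T] (pairV U W).
Proof. exact: measurable_fun_pair. Qed.
HB.instance Definition _ := isMeasurableFun.Build _ _ _ _ (pairV U W) pairV_meas.
End inst.

Section inst4.
Context (d : measure_display) (T : measurableType d) (R : realType).
Variables (A B C D : {mfun T >-> R}).
Lemma vec4_meas : measurable_fun [set: T] (vec4 A B C D).
Proof.
apply: measurable_fun_pair => //; apply: measurable_fun_pair => //;
  exact: measurable_fun_pair.
Qed.
HB.instance Definition _ := isMeasurableFun.Build _ _ _ _ (vec4 A B C D) vec4_meas.
End inst4.

Section main.
Context {d : measure_display} {T : measurableType d} {R : realType} {P : probability T R}.
Local Notation L2 X := (X \in Lfun P 2%:E).

Lemma int_dist d' (Y : measurableType d') (V : {RV P >-> Y}) (f : Y -> \bar R) :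
  measurable_fun [set: Y] f ->
  (\int[distribution P V]_y f y = \int[P]_x f (V x))%E.
Proof.
move=> mf.
rewrite integralE [RHS]integralE.
rewrite ge0_integral_distribution; last 2 first.
  exact: measurable_funepos.
  by move=> y; exact: funepos_ge0.
rewrite ge0_integral_distribution; last 2 first.
  exact: measurable_funeneg.
  by move=> y; exact: funeneg_ge0.
by rewrite -funepos_comp -funeneg_comp.
Qed.

Lemma int_transfer {d'} {Y : measurableType d'} {V W : {RV P >-> Y}} :
  (forall S, measurable S -> P (V @^-1` S) = P (W @^-1` S)) ->
  forall {f : Y -> \bar R}, measurable_fun [set: Y] f ->
  (\int[P]_x f (V x) = \int[P]_x f (W x))%E.
Proof.
move=> law f mf.
rewrite -!int_dist//.
apply: eq_measure_integral => S mS _.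
exact: law.
Qed.

Section indep.
Local Open Scope ereal_scope.
Lemma Pfin : P setT \is a fin_num.
Proof. exact: fin_num_measure. Qed.

Lemma integrable_dist d' (Y : measurableType d') (W : {RV P >-> Y}) (q : Y -> R) :
  measurable_fun setT q -> (q \o W) \in Lfun P 1 ->
  (distribution P W).-integrable setT (EFin \o q).
Proof.
move=> mq /Lfun1_integrable /integrableP [_ fin].
apply/integrableP; split; first exact/measurable_EFinP.
rewrite int_dist//.
apply: measurableT_comp => //; exact/measurable_EFinP.
Qed.

Lemma indep_mul {d'} {Y : measurableType d'} {U W : {RV P >-> Y}} :
  (forall A B, measurable A -> measurable B ->
     P (U @^-1` A `&` W @^-1` B) = P (U @^-1` A) * P (W @^-1` B)) ->
  forall {p q : Y -> R}, measurable_fun setT p -> measurable_fun setT q ->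
  (p \o U) \in Lfun P 2%:E -> (q \o W) \in Lfun P 2%:E ->
  'E_P[(p \o U) * (q \o W)] = 'E_P[p \o U] * 'E_P[q \o W].
Proof.
move=> ind p q mp mq pU2 qW2.
have pU1 := Lfun_subset12 Pfin pU2.
have qW1 := Lfun_subset12 Pfin qW2.
have pq1 := Lfun2_mul_Lfun1 pU2 qW2.
pose F : Y * Y -> \bar R := fun z => (p z.1 * q z.2)%:E.
have mF : measurable_fun setT F.
  apply/measurable_EFinP; apply: measurable_funM.
    exact: measurableT_comp.
  exact: measurableT_comp.
have prodE : forall X, measurable X ->
    (distribution P U \x distribution P W) X = distribution P (pairV U W) X.
  apply: product_measure_unique => A B mA mB.
  rewrite /= /pushforward -ind//.
have E1 : 'E_P[(p \o U) * (q \o W)] =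
    \int[distribution P U \x distribution P W]_z F z.
  rewrite (eq_measure_integral (distribution P (pairV U W))); last first.
    by move=> X mX _; apply: prodE.
  by rewrite int_dist// unlock.
have intF : (distribution P U \x distribution P W).-integrable setT F.
  apply/integrableP; split => //.
  rewrite (eq_measure_integral (distribution P (pairV U W))); last first.
    by move=> X mX _; apply: prodE.
  rewrite int_dist; last exact: measurableT_comp.
  by move/Lfun1_integrable: pq1 => /integrableP [_].
rewrite E1 -integral12_prod_meas1 //.
have qfin := expectation_fin_num qW1.
have inner : forall x, fubini_F (distribution P W) F x =
    (p x)%:E * 'E_P[q \o W].
  move=> x; rewrite /fubini_F /F.
  under eq_integral do rewrite /= EFinM.
  rewrite integralZl//; last exact: integrable_dist.
  rewrite int_dist; first by rewrite unlock.
  exact/measurable_EFinP.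
rewrite (eq_integral (fun x => (p x)%:E * 'E_P[q \o W])); last first.
  by move=> x _; rewrite inner.
rewrite -(fineK qfin) integralZr//; last exact: integrable_dist.
rewrite int_dist; first by rewrite unlock.
exact/measurable_EFinP.
Qed.
End indep.

Lemma L21 {X} : L2 X -> X \in Lfun P 1.
Proof. move=> h; have := Pfin. move=> pf. exact: (Lfun_subset12 pf h). Qed.

Lemma ExE X : L2 X -> ('E_P[X] = (Ex P X)%:E)%E.
Proof. by move=> h; rewrite /Ex fineK// expectation_fin_num// L21. Qed.

Lemma cov_fin X Y : L2 X -> L2 Y -> covariance P X Y \is a fin_num.
Proof.
move=> hX hY.
have hXY : (X * Y)%R \in Lfun P 1 := Lfun2_mul_Lfun1 hX hY.
exact: covariance_fin_num (L21 hX) (L21 hY) hXY.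
Qed.

Lemma CovEf X Y : L2 X -> L2 Y -> covariance P X Y = (Cov P X Y)%:E.
Proof. by move=> hX hY; rewrite /Cov fineK// cov_fin. Qed.

Lemma CovE X Y : L2 X -> L2 Y -> Cov P X Y = Ex P (X * Y) - Ex P X * Ex P Y.
Proof.
move=> hX hY.
have hXY : (X * Y)%R \in Lfun P 1 := Lfun2_mul_Lfun1 hX hY.
have fX := expectation_fin_num (L21 hX).
have fY := expectation_fin_num (L21 hY).
have fXY := expectation_fin_num hXY.
rewrite /Cov (covarianceE (L21 hX) (L21 hY) hXY).
by rewrite /Ex fineB ?fineM// fin_numM.
Qed.

Lemma CovC X Y : Cov P X Y = Cov P Y X.
Proof. by rewrite /Cov covarianceC. Qed.

Lemma CovDl X Y Z : L2 X -> L2 Y -> L2 Z ->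
  Cov P (X \+ Y)%R Z = Cov P X Z + Cov P Y Z.
Proof.
move=> hX hY hZ; rewrite /Cov covarianceDl// fineD//; exact: cov_fin.
Qed.

Lemma CovDr X Y Z : L2 X -> L2 Y -> L2 Z ->
  Cov P X (Y \+ Z)%R = Cov P X Y + Cov P X Z.
Proof. by move=> hX hY hZ; rewrite CovC CovDl// !(CovC X). Qed.

Lemma CovZl a X Y : L2 X -> L2 Y -> Cov P (a \o* X)%R Y = a * Cov P X Y.
Proof.
move=> hX hY.
have hXY : (X * Y)%R \in Lfun P 1 := Lfun2_mul_Lfun1 hX hY.
rewrite /Cov (covarianceZl a (L21 hX) (L21 hY) hXY).
by rewrite fineM// cov_fin.
Qed.

Lemma CovZr a X Y : L2 X -> L2 Y -> Cov P X (a \o* Y)%R = a * Cov P X Y.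
Proof. by move=> hX hY; rewrite CovC CovZl// CovC. Qed.

Lemma Cov_cstr X c : Cov P X (cst c) = 0.
Proof. by rewrite /Cov covariance_cst_r. Qed.

Lemma Cov_cstl X c : Cov P (cst c) X = 0.
Proof. by rewrite /Cov covariance_cst_l. Qed.

Lemma L2_0 : L2 (0 : T -> R).
Proof. by apply: rpred0; rewrite lee_fin ler1n. Qed.

Lemma L2_D X Y : L2 X -> L2 Y -> L2 (X + Y).
Proof. by move=> hX hY; apply: rpredD => //; rewrite lee_fin ler1n. Qed.

Lemma L2_B X Y : L2 X -> L2 Y -> L2 (X - Y).
Proof. by move=> hX hY; apply: rpredB => //; rewrite lee_fin ler1n. Qed.

Lemma L2_Z a X : L2 X -> L2 (a \o* X)%R.
Proof. by move=> hX; apply: Lfun_scale => //; rewrite ler1n. Qed.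

Lemma L2_sum (I : finType) (F : I -> T -> R) : (forall i, L2 (F i)) ->
  L2 (\sum_i F i).
Proof. move=> h; apply: rpred_sum; first by rewrite lee_fin ler1n.
by move=> ? i _; exact: h. Qed.

Lemma Cov_suml (I : finType) (F : I -> T -> R) Z : (forall i, L2 (F i)) -> L2 Z ->
  Cov P (\sum_i F i) Z = \sum_i Cov P (F i) Z.
Proof.
move=> hF hZ.
suff [] : L2 (\sum_i F i) /\ Cov P (\sum_i F i) Z = \sum_i Cov P (F i) Z by [].
apply: (big_ind2 (fun (f : T -> R) r => L2 f /\ Cov P f Z = r)).
- split; first exact: L2_0.
  by rewrite -(Cov_cstl Z 0).
- move=> f1 r1 f2 r2 [h1 e1] [h2 e2]; split; first exact: L2_D.
  by rewrite -e1 -e2 -CovDl.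
- by move=> i _; split.
Qed.

Lemma Cov_sumr (I : finType) (F : I -> T -> R) Z : (forall i, L2 (F i)) -> L2 Z ->
  Cov P Z (\sum_i F i) = \sum_i Cov P Z (F i).
Proof.
by move=> hF hZ; rewrite CovC Cov_suml//; apply: eq_bigr => i _; rewrite CovC.
Qed.


Section transfer.
Context {d'} {Y : measurableType d'}.

Lemma L2_transfer {V W : {RV P >-> Y}} :
  (forall S, measurable S -> P (V @^-1` S) = P (W @^-1` S)) ->
  forall {p : Y -> R}, measurable_fun setT p -> L2 (p \o W) -> L2 (p \o V).
Proof.
move=> law p mp /andP [_]; rewrite !inE /= /finite_norm => hW.
apply/andP; split; first by rewrite inE /=; exact: measurableT_comp.
rewrite inE /= /finite_norm.
suff -> : ('N[P]_2%:E[EFin \o (p \o V)] = 'N[P]_2%:E[EFin \o (p \o W)])%E by [].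
rewrite unlock /=; congr (_ `^ _)%E.
have mf : measurable_fun [set: Y] (fun y => ((`|p y| `^ 2)%:E : \bar R)).
  apply/measurable_EFinP.
  apply: (measurableT_comp (measurable_powR _)) => //.
  exact: measurableT_comp.
exact: (int_transfer law mf).
Qed.

Lemma Ex_transfer {V W : {RV P >-> Y}} :
  (forall S, measurable S -> P (V @^-1` S) = P (W @^-1` S)) ->
  forall {p : Y -> R}, measurable_fun setT p -> Ex P (p \o V) = Ex P (p \o W).
Proof.
move=> law p mp; rewrite /Ex !unlock; congr fine.
have mf : measurable_fun [set: Y] (EFin \o p) by exact/measurable_EFinP.
exact: (int_transfer law mf).
Qed.

Lemma Cov_transfer {V W : {RV P >-> Y}} :
  (forall S, measurable S -> P (V @^-1` S) = P (W @^-1` S)) ->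
  forall {p q : Y -> R}, measurable_fun setT p -> measurable_fun setT q ->
  L2 (p \o W) -> L2 (q \o W) ->
  Cov P (p \o V) (q \o V) = Cov P (p \o W) (q \o W).
Proof.
move=> law p q mp mq hp hq.
have hpV := L2_transfer law mp hp.
have hqV := L2_transfer law mq hq.
rewrite CovE// [RHS]CovE//.
rewrite !(Ex_transfer law)//.
have mpq : measurable_fun [set: Y] (fun y => p y * q y) by exact: measurable_funM.
have := Ex_transfer law mpq.
by move=> ->.
Qed.

Lemma Cov_indep {U W : {RV P >-> Y}} :
  (forall A B, measurable A -> measurable B ->
     P (U @^-1` A `&` W @^-1` B) = (P (U @^-1` A) * P (W @^-1` B))%E) ->
  forall {p q : Y -> R}, measurable_fun setT p -> measurable_fun setT q ->
  L2 (p \o U) -> L2 (q \o W) ->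
  Cov P (p \o U) (q \o W) = 0.
Proof.
move=> ind p q mp mq hp hq.
rewrite CovE// /Ex (indep_mul ind mp mq hp hq) fineM ?subrr//;
  [exact: expectation_fin_num (L21 hp)|exact: expectation_fin_num (L21 hq)]. Qed.

End transfer.

Lemma L2_cst c : L2 (cst c : T -> R).
Proof. exact: Lfun_cst. Qed.

Lemma Ex_D X Y : L2 X -> L2 Y -> Ex P (X \+ Y)%R = Ex P X + Ex P Y.
Proof.
move=> hX hY; rewrite /Ex expectationD ?L21 //.
by rewrite (fineD (expectation_fin_num (L21 hX)) (expectation_fin_num (L21 hY))).
Qed.

Lemma Ex_Z a X : L2 X -> Ex P (a \o* X)%R = a * Ex P X.
Proof.
move=> hX; rewrite /Ex expectationZl ?L21 //.
by rewrite (fineM _ (expectation_fin_num (L21 hX))).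
Qed.

Lemma Ex_cst c : Ex P (cst c) = c.
Proof. by rewrite /Ex expectation_cst. Qed.

Lemma Ex_sum n (F : 'I_n -> T -> R) : (forall i, L2 (F i)) ->
  Ex P (\sum_i F i) = \sum_i Ex P (F i).
Proof.
move=> hF.
suff [] : L2 (\sum_i F i) /\ Ex P (\sum_i F i) = \sum_i Ex P (F i) by [].
apply: (big_ind2 (fun (f : T -> R) r => L2 f /\ Ex P f = r)).
- split; first exact: L2_0.
  by rewrite -(Ex_cst 0).
- move=> f1 r1 f2 r2 [h1 e1] [h2 e2]; split; first exact: L2_D.
  by rewrite -e1 -e2 -Ex_D.
- by move=> i _; split.
Qed.


End main.

Section alg.
Variable R : realFieldType.
Variables (caa cab cbb ccc ccd cdd cac cad cbc cbd ea ec nn : R).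
Hypotheses (hb : 0 < cbb) (hd : 0 < cdd) (hden : cbd ^+ 2 < cbb * cdd)
  (hea : ea != 0) (hec : ec != 0) (hn : 0 < nn).

Definition alg_G (a b : R) :=
  (caa - a * cab - a * cab + a * a * cbb) / nn / ec ^+ 2
  + ea ^+ 2 / ec ^+ 4 * ((ccc - b * ccd - b * ccd + b * b * cdd) / nn)
  - 2 * (ea / ec ^+ 3) * ((cac - b * cad - a * cbc + a * b * cbd) / nn).

Definition alg_Rr := ea / ec.
Definition alg_den := cbb * cdd - cbd ^+ 2.
Definition alg_a0 := (cdd * cab - alg_Rr * cdd * cbc + alg_Rr * cbd * ccd - cbd * cad) / alg_den.
Definition alg_b0 := (cbd * cab - alg_Rr * cbd * cbc + alg_Rr * cbb * ccd - cbb * cad) / (alg_Rr * alg_den).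

Lemma Gdiff a b : alg_G a b - alg_G alg_a0 alg_b0 =
  (cbb * (a - alg_a0) ^+ 2 - 2 * cbd * (a - alg_a0) * (alg_Rr * (b - alg_b0))
   + cdd * (alg_Rr * (b - alg_b0)) ^+ 2) / (nn * ec ^+ 2).
Proof.
have den0 : alg_den != 0 by rewrite /alg_den subr_eq0 gt_eqF.
have R0 : alg_Rr != 0 by rewrite /alg_Rr mulf_neq0 ?invr_eq0.
rewrite /alg_G /alg_a0 /alg_b0.
move: den0 R0; rewrite /alg_Rr /alg_den => den0 R0.
field.
by rewrite hec den0 hea gt_eqF.
Qed.

Lemma form_ge0 x y : 0 <= cbb * x ^+ 2 - 2 * cbd * x * y + cdd * y ^+ 2.
Proof.
have h : cbb * (cbb * x ^+ 2 - 2 * cbd * x * y + cdd * y ^+ 2) =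
  (cbb * x - cbd * y) ^+ 2 + (cbb * cdd - cbd ^+ 2) * y ^+ 2 by ring.
have : 0 <= cbb * (cbb * x ^+ 2 - 2 * cbd * x * y + cdd * y ^+ 2).
  rewrite h addr_ge0 ?sqr_ge0 // mulr_ge0 ?sqr_ge0 //.
  by rewrite subr_ge0 ltW.
by rewrite pmulr_rge0.
Qed.

Lemma form_eq0 x y : cbb * x ^+ 2 - 2 * cbd * x * y + cdd * y ^+ 2 <= 0 ->
  x = 0 /\ y = 0.
Proof.
move=> hle.
have h : cbb * (cbb * x ^+ 2 - 2 * cbd * x * y + cdd * y ^+ 2) =
  (cbb * x - cbd * y) ^+ 2 + (cbb * cdd - cbd ^+ 2) * y ^+ 2 by ring.
have hdp : 0 < cbb * cdd - cbd ^+ 2 by rewrite subr_gt0.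
have e0 : cbb * x ^+ 2 - 2 * cbd * x * y + cdd * y ^+ 2 = 0.
  by apply/eqP; rewrite eq_le hle form_ge0.
have p1 : 0 <= (cbb * x - cbd * y) ^+ 2 by exact: sqr_ge0.
have p2 : 0 <= (cbb * cdd - cbd ^+ 2) * y ^+ 2 by rewrite mulr_ge0 ?sqr_ge0 // ltW.
move: h; rewrite e0 mulr0 => /esym /eqP; rewrite (paddr_eq0 p1 p2).
move=> /andP [/eqP h1 /eqP h2].
have y0 : y = 0.
  by move: h2 => /eqP; rewrite mulf_eq0 (gt_eqF hdp) /= sqrf_eq0 => /eqP.
split => //.
move: h1; rewrite y0 mulr0 subr0 => /eqP; rewrite sqrf_eq0 mulf_eq0 (gt_eqF hb) /=.
by move/eqP.
Qed.

Lemma opt_main :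
  (forall a b, alg_G alg_a0 alg_b0 <= alg_G a b) /\
  (forall a b, (forall a' b', alg_G a b <= alg_G a' b') -> a = alg_a0 /\ b = alg_b0) /\
  alg_G alg_a0 alg_b0 <= alg_G 0 0.
Proof.
have hq : 0 < nn * ec ^+ 2 by rewrite mulr_gt0 // exprn_even_gt0.
have gle : forall a b, alg_G alg_a0 alg_b0 <= alg_G a b.
  move=> a b; rewrite -subr_ge0 Gdiff; apply: divr_ge0; [exact: form_ge0|exact: ltW].
split => //; split; last exact: gle.
move=> a b hmin.
have := hmin alg_a0 alg_b0; rewrite -subr_le0 Gdiff pmulr_lle0 ?invr_gt0 //.
move/form_eq0 => [/eqP h1 /eqP h2].
have R0 : alg_Rr != 0 by rewrite /alg_Rr mulf_neq0 ?invr_eq0.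
move: h2; rewrite mulf_eq0 (negbTE R0) /= subr_eq0 => /eqP ->.
by move: h1; rewrite subr_eq0 => /eqP ->.
Qed.

End alg.

Lemma corr_den (R : rcfType) (vb vd c : R) : 0 < vb -> 0 < vd ->
  `|c / Num.sqrt (vb * vd)| < 1 -> c ^+ 2 < vb * vd.
Proof.
move=> hb hd h.
have s0 : 0 < Num.sqrt (vb * vd) by rewrite sqrtr_gt0 mulr_gt0.
move: h; rewrite normrM normfV (gtr0_norm s0) ltr_pdivrMr // mul1r => h.
have e1 := sqr_sqrtr (ltW (mulr_gt0 hb hd)).
have e2 := real_normK (num_real c).
have n0 : 0 <= `|c| by exact: normr_ge0.
rewrite -e1 -e2.
nra.
Qed.

Section NM2.
Context {d : measure_display} {T : measurableType d} {R : realType} {P : probability T R}.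
Local Notation L2 X := (X \in Lfun P 2%:E).
Variable n : nat.
Hypothesis hn : (0 < n)%N.

Lemma Nrep (X Y : 'I_n -> T -> R) (a c : R) :
  (fun t => smean X t + a * (c - smean Y t)) =
  (n%:R^-1 \o* (\sum_i (X i \+ (-a) \o* Y i)) \+ cst (a * c))%R.
Proof.
apply/funext => t /=; rewrite /smean fct_sumE /= big_split /= -mulr_suml.
ring.
Qed.

Lemma cov_NM (X1 Y1 X2 Y2 : 'I_n -> T -> R) (x1 y1 x2 y2 : T -> R) (a b c1 c2 : R) :
  (forall i, L2 (X1 i)) -> (forall i, L2 (Y1 i)) ->
  (forall i, L2 (X2 i)) -> (forall i, L2 (Y2 i)) ->
  (forall i j, Cov P (X1 i) (X2 j) = if i == j then Cov P x1 x2 else 0) ->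
  (forall i j, Cov P (X1 i) (Y2 j) = if i == j then Cov P x1 y2 else 0) ->
  (forall i j, Cov P (Y1 i) (X2 j) = if i == j then Cov P y1 x2 else 0) ->
  (forall i j, Cov P (Y1 i) (Y2 j) = if i == j then Cov P y1 y2 else 0) ->
  Cov P (fun t => smean X1 t + a * (c1 - smean Y1 t))
        (fun t => smean X2 t + b * (c2 - smean Y2 t))
  = (Cov P x1 x2 - b * Cov P x1 y2 - a * Cov P y1 x2 + a * b * Cov P y1 y2)
     / n%:R.
Proof.
move=> h1 h2 h3 h4 e11 e12 e21 e22.
rewrite !Nrep.
have hU : forall i, L2 (X1 i \+ (-a) \o* Y1 i)%R.
  by move=> i; apply: L2_D => //; apply: L2_Z.
have hW : forall i, L2 (X2 i \+ (-b) \o* Y2 i)%R.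
  by move=> i; apply: L2_D => //; apply: L2_Z.
have hSU := L2_sum _ _ hU.
have hSW := L2_sum _ _ hW.
set K := (Cov P x1 x2 - b * Cov P x1 y2 - a * Cov P y1 x2 + a * b * Cov P y1 y2).
have key : forall i j, Cov P (X1 i \+ (-a) \o* Y1 i)%R (X2 j \+ (-b) \o* Y2 j)%R
    = if i == j then K else 0.
  move=> i j.
  rewrite CovDl ?L2_Z // !CovDr ?L2_Z // !CovZl ?L2_Z // !CovZr //.
  rewrite e11 e12 e21 e22 /K; case: (i == j); ring.
have Hcl : forall (c : R) (X : T -> R), Cov P (cst c) X = 0 by move=> c X; exact: Cov_cstl.
have Hcr : forall (c : R) (X : T -> R), Cov P X (cst c) = 0 by move=> c X; exact: Cov_cstr.
rewrite CovDl ?L2_D ?L2_Z ?L2_cst //. erewrite Hcl. rewrite addr0.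
rewrite CovDr ?L2_D ?L2_Z ?L2_cst //. erewrite Hcr. rewrite addr0.
rewrite CovZl ?L2_Z // CovZr //.
rewrite Cov_suml //.
rewrite (eq_bigr (fun i => K)); last first.
  move=> i _; rewrite Cov_sumr //.
  rewrite (eq_bigr (fun j => if i == j then K else 0)); last by move=> j _; rewrite key.
  rewrite (bigD1 i) //= eqxx big1 ?addr0 // => j /negbTE.
  by rewrite eq_sym => ->.
rewrite sumr_const card_ord -mulr_natr.
have n0 : n%:R != 0 :> R by rewrite pnatr_eq0 -lt0n.
by field; rewrite pnatr_eq0 -lt0n.
Qed.

Lemma Ex_N (X Y : 'I_n -> T -> R) (x y : T -> R) (a c : R) :
  (forall i, L2 (X i)) -> (forall i, L2 (Y i)) ->
  (forall i, Ex P (X i) = Ex P x) -> (forall i, Ex P (Y i) = Ex P y) ->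
  Ex P (fun t => smean X t + a * (c - smean Y t)) = Ex P x + a * (c - Ex P y).
Proof.
move=> h1 h2 e1 e2.
rewrite Nrep.
have hU : forall i, L2 (X i \+ (-a) \o* Y i)%R.
  by move=> i; apply: L2_D => //; apply: L2_Z.
have hSU := L2_sum _ _ hU.
rewrite Ex_D ?L2_Z ?L2_cst // Ex_Z // Ex_cst Ex_sum //.
rewrite (eq_bigr (fun i => Ex P x + (- a) * Ex P y)); last first.
  by move=> i _; rewrite Ex_D ?L2_Z // Ex_Z // e1 e2.
rewrite sumr_const card_ord -mulr_natr.
by field; rewrite pnatr_eq0 -lt0n.
Qed.

End NM2.

Theorem mainTheorem5 (d : measure_display) (T : measurableType d) (R : realType)
  (P : probability T R) (A B C D : {RV P >-> R}) (n : nat)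
  (As Bs Cs Ds : 'I_n -> {RV P >-> R}) :
  (A : T -> R) \in Lfun P 2 -> (B : T -> R) \in Lfun P 2 ->
  (C : T -> R) \in Lfun P 2 -> (D : T -> R) \in Lfun P 2 ->
  0 < Var P B -> 0 < Var P D -> `|Corr P B D| < 1 ->
  Ex P A != 0 -> Ex P C != 0 ->
  (1 <= n)%N ->
  (forall i, same_law P (vec4 (As i) (Bs i) (Cs i) (Ds i)) (vec4 A B C D)) ->
  mutually_independent P (fun i => vec4 (As i) (Bs i) (Cs i) (Ds i)) ->
  let Rr := Ex P A / Ex P C in
  let N := fun alpha : R => fun t =>
    smean As t + alpha * (Ex P B - smean Bs t) in
  let M := fun beta : R => fun t =>
    smean Cs t + beta * (Ex P D - smean Ds t) in
  let den := Var P B * Var P D - Cov P B D ^+ 2 in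
  let alpha_o := (Var P D * Cov P A B - Rr * Var P D * Cov P B C
                  + Rr * Cov P B D * Cov P C D - Cov P B D * Cov P A D) / den in
  let beta_o := (Cov P B D * Cov P A B - Rr * Cov P B D * Cov P B C
                 + Rr * Var P B * Cov P C D - Var P B * Cov P A D) / (Rr * den) in
  (forall alpha beta, Phi P (N alpha_o) (M beta_o) <= Phi P (N alpha) (M beta)) /\
  (forall alpha beta,
     (forall alpha' beta', Phi P (N alpha) (M beta) <= Phi P (N alpha') (M beta')) ->
     alpha = alpha_o /\ beta = beta_o) /\
  Phi P (N alpha_o) (M beta_o) <= Phi P (smean As) (smean Cs).
Proof.
move=> hA hB hC hD vB vD corr eA eC n1 law indep Rr0 N M den0 alpha_o beta_o.
pose V := fun i => vec4 (As i) (Bs i) (Cs i) (Ds i).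
pose V0 := vec4 A B C D.
have law' : forall i S, measurable S -> P (V i @^-1` S) = P (V0 @^-1` S).
  by move=> i; exact: law.
have ind : forall i j, i != j -> forall A0 B0, measurable A0 -> measurable B0 ->
    P (V i @^-1` A0 `&` V j @^-1` B0) = (P (V i @^-1` A0) * P (V j @^-1` B0))%E.
  move=> i j ij A0 B0 mA mB.
  have := indep [set i; j]%SET (fun k => if k == i then A0 else B0).
  have hS : forall k, measurable (if k == i then A0 else B0) by move=> k; case: ifP.
  move=> /(_ hS).
  rewrite big_setU1 ?big_set1 /=; last by rewrite inE.
  rewrite eqxx [j == i]eq_sym (negbTE ij) => <-.
  congr (P _); apply/seteqP; split => x /=.
  - move=> [hi hj] k /=; rewrite !inE => /orP [/eqP -> | /eqP ->].
      by rewrite eqxx.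
    by rewrite eq_sym (negbTE ij).
  - move=> h; split.
      by have := h i; rewrite eqxx; apply; rewrite /= !inE eqxx.
    by have := h j; rewrite [j == i]eq_sym (negbTE ij); apply; rewrite /= !inE eqxx orbT.
pose pA := fun y : (R * R * R * R)%type => y.1.1.1.
pose pB := fun y : (R * R * R * R)%type => y.1.1.2.
pose pC := fun y : (R * R * R * R)%type => y.1.2.
pose pD := fun y : (R * R * R * R)%type => y.2.
have mpA : measurable_fun setT pA.
  by apply: measurableT_comp => //; apply: measurableT_comp.
have mpB : measurable_fun setT pB.
  by apply: measurableT_comp => //; apply: measurableT_comp.
have mpC : measurable_fun setT pC by exact: measurableT_comp.
have mpD : measurable_fun setT pD by exact: measurable_snd.
have L2V : forall p, measurable_fun setT p -> (p \o V0) \in Lfun P 2%:E ->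
    forall i, (p \o V i) \in Lfun P 2%:E.
  by move=> p mp h i; exact: (L2_transfer (law' i) mp h).
have covij : forall p q, measurable_fun setT p -> measurable_fun setT q ->
    (p \o V0) \in Lfun P 2%:E -> (q \o V0) \in Lfun P 2%:E ->
    forall i j, Cov P (p \o V i) (q \o V j) =
      if i == j then Cov P (p \o V0) (q \o V0) else 0.
  move=> p q mp mq hp hq i j; case: eqP => [<-|/eqP ij].
    exact: (Cov_transfer (law' i) mp mq hp hq).
  exact: (Cov_indep (ind i j ij) mp mq (L2V p mp hp i) (L2V q mq hq j)).
have exi : forall p, measurable_fun setT p -> forall i,
    Ex P (p \o V i) = Ex P (p \o V0).
  by move=> p mp i; exact: (Ex_transfer (law' i) mp).
have LA : forall i, (As i : T -> R) \in Lfun P 2%:E := L2V pA mpA hA.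
have LB : forall i, (Bs i : T -> R) \in Lfun P 2%:E := L2V pB mpB hB.
have LC : forall i, (Cs i : T -> R) \in Lfun P 2%:E := L2V pC mpC hC.
have LD : forall i, (Ds i : T -> R) \in Lfun P 2%:E := L2V pD mpD hD.
have xA : forall i, Ex P (As i) = Ex P A := exi pA mpA.
have xB : forall i, Ex P (Bs i) = Ex P B := exi pB mpB.
have xC : forall i, Ex P (Cs i) = Ex P C := exi pC mpC.
have xD : forall i, Ex P (Ds i) = Ex P D := exi pD mpD.
have cAA : forall i j, Cov P (As i) (As j) = if i == j then Cov P A A else 0
  := covij pA pA mpA mpA hA hA.
have cAB : forall i j, Cov P (As i) (Bs j) = if i == j then Cov P A B else 0
  := covij pA pB mpA mpB hA hB.
have cBA : forall i j, Cov P (Bs i) (As j) = if i == j then Cov P B A else 0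
  := covij pB pA mpB mpA hB hA.
have cBB : forall i j, Cov P (Bs i) (Bs j) = if i == j then Cov P B B else 0
  := covij pB pB mpB mpB hB hB.
have cCC : forall i j, Cov P (Cs i) (Cs j) = if i == j then Cov P C C else 0
  := covij pC pC mpC mpC hC hC.
have cCD : forall i j, Cov P (Cs i) (Ds j) = if i == j then Cov P C D else 0
  := covij pC pD mpC mpD hC hD.
have cDC : forall i j, Cov P (Ds i) (Cs j) = if i == j then Cov P D C else 0
  := covij pD pC mpD mpC hD hC.
have cDD : forall i j, Cov P (Ds i) (Ds j) = if i == j then Cov P D D else 0
  := covij pD pD mpD mpD hD hD.
have cAC : forall i j, Cov P (As i) (Cs j) = if i == j then Cov P A C else 0
  := covij pA pC mpA mpC hA hC.
have cAD : forall i j, Cov P (As i) (Ds j) = if i == j then Cov P A D else 0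
  := covij pA pD mpA mpD hA hD.
have cBC : forall i j, Cov P (Bs i) (Cs j) = if i == j then Cov P B C else 0
  := covij pB pC mpB mpC hB hC.
have cBD : forall i j, Cov P (Bs i) (Ds j) = if i == j then Cov P B D else 0
  := covij pB pD mpB mpD hB hD.
have PhiE : forall a b, Phi P (N a) (M b) =
    alg_G R (Cov P A A) (Cov P A B) (Var P B) (Cov P C C) (Cov P C D) (Var P D)
      (Cov P A C) (Cov P A D) (Cov P B C) (Cov P B D) (Ex P A) (Ex P C) n%:R a b.
  move=> a b.
  have EN : Ex P (N a) = Ex P A.
    by rewrite /N /= (Ex_N n n1 _ _ _ _ _ _ LA LB xA xB) subrr mulr0 addr0.
  have EM : Ex P (M b) = Ex P C.
    by rewrite /M /= (Ex_N n n1 _ _ _ _ _ _ LC LD xC xD) subrr mulr0 addr0.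
  rewrite /Phi EN EM.
  change (Var P (N a)) with (Cov P (N a) (N a)).
  change (Var P (M b)) with (Cov P (M b) (M b)).
  rewrite /N /M /=.
  rewrite (cov_NM n n1 _ _ _ _ _ _ _ _ _ _ _ _ LA LB LA LB cAA cAB cBA cBB).
  rewrite (cov_NM n n1 _ _ _ _ _ _ _ _ _ _ _ _ LC LD LC LD cCC cCD cDC cDD).
  rewrite (cov_NM n n1 _ _ _ _ _ _ _ _ _ _ _ _ LA LB LC LD cAC cAD cBC cBD).
  rewrite (CovC (B : T -> R) A) (CovC (D : T -> R) C).
  by rewrite /alg_G.
have hden : Cov P B D ^+ 2 < Var P B * Var P D.
  by apply: corr_den => //; move: corr; rewrite /Corr.
have hn : (0 : R) < n%:R by rewrite ltr0n.
have [H1 [H2 H3]] := opt_main R (Cov P A A) (Cov P A B) (Var P B) (Cov P C C)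
  (Cov P C D) (Var P D) (Cov P A C) (Cov P A D) (Cov P B C) (Cov P B D)
  (Ex P A) (Ex P C) n%:R vB hden eA eC hn.
have Ea : alg_a0 R (Cov P A B) (Var P B) (Cov P C D) (Var P D) (Cov P A D)
  (Cov P B C) (Cov P B D) (Ex P A) (Ex P C) = alpha_o by [].
have Eb : alg_b0 R (Cov P A B) (Var P B) (Cov P C D) (Var P D) (Cov P A D)
  (Cov P B C) (Cov P B D) (Ex P A) (Ex P C) = beta_o by [].
rewrite Ea Eb in H1 H2 H3.
split.
  by move=> a b; rewrite !PhiE; exact: H1.
split.
  move=> a b h; apply: H2 => a' b'; rewrite -!PhiE; exact: h.
have -> : smean (fun x => As x) = N 0.
  by apply/funext => t; rewrite /N mul0r addr0.
have -> : smean (fun x => Cs x) = M 0.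
  by apply/funext => t; rewrite /M mul0r addr0.
by rewrite !PhiE; exact: H3.
Qed.
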